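(* Let $(X,d)$ be a geodesic space with $\operatorname{Curv}X\ge\kappa$ for some $\kappa\in\mathbb{R}$. Then $X$ is non-branching.
   Context: Let $(M^2_\kappa,d_\kappa)$ be the model plane of constant curvature $\kappa$. For a triangle $(a_1,a_2,a_3)$ in $X$, a comparison triangle is $(\bar a_1,\bar a_2,\bar a_3)$ in $M^2_\kappa$ with $d_\kappa(\bar a_i,\bar a_j)=d(a_i,a_j)$. The circumradius is $r(a_1,a_2,a_3)=\inf_{x\in X}\max_i d(x,a_i)$, and $r(\bar a_1,\bar a_2,\bar a_3)=\inf_{x\in M^2_\kappa}\max_i d_\kappa(x,\bar a_i)$. $\operatorname{Curv}X\ge\kappa$ means $r(a_1,a_2,a_3)\ge r(\bar a_1,\bar a_2,\bar a_3)$ for all triangles in $X$ (for $\kappa>0$ only for triangles whose comparison triangle lies in some ball of radius $\frac{\pi}{2\sqrt\kappa}$). For $t\in[0,1]$ let $Z_t(x,y)=\{z\in X: d(x,z)=t\,d(x,y),\ d(z,y)=(1-t)d(x,y)\}$. A geodesic space is non-branching if for all $x,y,y'\in X$ with $d(x,y)=d(x,y')$, the condition $Z_t(x,y)\cap Z_t(x,y')\neq\emptyset$ for some $t\in(0,1)$ implies $y=y'$. *)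

(* Defs.v *)
From Stdlib Require Import Reals Lra.
From Coquelicot Require Import Coquelicot.
Open Scope R_scope.

Definition is_metric {X : Type} (d : X -> X -> R) : Prop :=
  (forall x y, 0 <= d x y) /\
  (forall x y, d x y = 0 <-> x = y) /\
  (forall x y, d x y = d y x) /\
  (forall x y z, d x z <= d x y + d y z).

Definition is_geodesic_space {X : Type} (d : X -> X -> R) : Prop :=
  forall x y : X, exists gamma : R -> X,
    gamma 0 = x /\ gamma (d x y) = y /\
    forall s t, 0 <= s <= d x y -> 0 <= t <= d x y ->
      d (gamma s) (gamma t) = Rabs (s - t).

Definition Zt {X : Type} (d : X -> X -> R) (t : R) (x y : X) (z : X) : Prop :=
  d x z = t * d x y /\ d z y = (1 - t) * d x y.

Definition non_branching {X : Type} (d : X -> X -> R) : Prop :=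
  forall x y y' : X, d x y = d x y' ->
    (exists t, 0 < t < 1 /\ exists z, Zt d t x y z /\ Zt d t x y' z) ->
    y = y'.

Definition R3 : Type := (R * R * R)%type.

Definition p0 (p : R3) : R := fst (fst p).
Definition p1 (p : R3) : R := snd (fst p).
Definition p2 (p : R3) : R := snd p.

Definition euclid_dot (p q : R3) : R := p0 p * p0 q + p1 p * p1 q + p2 p * p2 q.
Definition lorentz_dot (p q : R3) : R := p0 p * p0 q - p1 p * p1 q - p2 p * p2 q.

(** kappa = 0: the plane {p2 = 0};
    kappa > 0: sphere of radius 1/sqrt kappa;
    kappa < 0: upper sheet of the hyperboloid <p,p>_L = 1/(-kappa). *)
Definition on_model (kappa : R) (p : R3) : Prop :=
  if Rlt_dec 0 kappa then euclid_dot p p = / kappa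
  else if Rlt_dec kappa 0 then lorentz_dot p p = / (- kappa) /\ 0 < p0 p
  else p2 p = 0.

Definition arcosh (t : R) : R := ln (t + sqrt (t * t - 1)).

Definition model_dist (kappa : R) (p q : R3) : R :=
  if Rlt_dec 0 kappa then / sqrt kappa * acos (kappa * euclid_dot p q)
  else if Rlt_dec kappa 0 then / sqrt (- kappa) * arcosh ((- kappa) * lorentz_dot p q)
  else sqrt ((p0 p - p0 q) ^ 2 + (p1 p - p1 q) ^ 2).

Definition Mk (kappa : R) : Type := { p : R3 | on_model kappa p }.
Definition dk (kappa : R) (a b : Mk kappa) : R := model_dist kappa (proj1_sig a) (proj1_sig b).

Definition max3 (u v w : R) : R := Rmax u (Rmax v w).

Definition circumradius {X : Type} (d : X -> X -> R) (a1 a2 a3 : X) : Rbar :=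
  Glb_Rbar (fun r => exists x : X, r = max3 (d x a1) (d x a2) (d x a3)).

Definition curv_ge {X : Type} (d : X -> X -> R) (kappa : R) : Prop :=
  forall (a1 a2 a3 : X) (b1 b2 b3 : Mk kappa),
    dk kappa b1 b2 = d a1 a2 ->
    dk kappa b1 b3 = d a1 a3 ->
    dk kappa b2 b3 = d a2 a3 ->
    (0 < kappa -> exists c : Mk kappa,
        dk kappa c b1 < PI / (2 * sqrt kappa) /\
        dk kappa c b2 < PI / (2 * sqrt kappa) /\
        dk kappa c b3 < PI / (2 * sqrt kappa)) ->
    Rbar_le (circumradius (dk kappa) b1 b2 b3) (circumradius d a1 a2 a3).

(* Main.v *)
Require Import Defs.
From Stdlib Require Import Reals Lra Classical.
From Coquelicot Require Import Coquelicot.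
Open Scope R_scope.
Set Bullet Behavior "Strict Subproofs".

Lemma cont_eps f x0 : continuity_pt f x0 -> forall g, 0 < g ->
  exists eta, 0 < eta /\ forall y, Rabs (y - x0) < eta -> Rabs (f y - f x0) < g.
Proof.
  intros Hc g Hg. destruct (Hc g Hg) as (alp & Ha & H).
  exists alp. split; [lra|]. intros y Hy.
  destruct (Req_dec y x0) as [->|Hne].
  - rewrite Rminus_diag, Rabs_R0. lra.
  - apply (H y). split; [split; [exact I| auto] | exact Hy].
Qed.

Lemma acos_lt x b : -1 <= x <= 1 -> 0 <= b <= PI -> acos x < b -> cos b < x.
Proof.
  intros Hx Hb H. pose proof (acos_bound x) as Ha. rewrite <- (cos_acos x Hx).
  apply cos_decreasing_1; lra.
Qed.

Lemma circ_small kappa (b1 b2 b3 : Mk kappa) s :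
  Rbar_le (circumradius (dk kappa) b1 b2 b3) (Finite s) ->
  forall eps, 0 < eps -> exists c,
    dk kappa c b1 < s + eps /\ dk kappa c b2 < s + eps /\ dk kappa c b3 < s + eps.
Proof.
  intros H eps He. unfold circumradius in H.
  set (E := fun r => exists x, r = max3 (dk kappa x b1) (dk kappa x b2) (dk kappa x b3)) in *.
  destruct (Glb_Rbar_correct E) as [_ Hg].
  apply NNPP; intro Hn.
  assert (Hlb : is_lb_Rbar E (s + eps)).
  { intros r [x ->]. simpl. unfold max3.
    apply Rnot_lt_le; intro Hlt. apply Hn. exists x.
    apply Rmax_Rlt in Hlt as [h1 h2]. apply Rmax_Rlt in h2 as [h2 h3]. auto. }
  specialize (Hg _ Hlb).
  pose proof (Rbar_le_trans _ _ _ Hg H). simpl in H0. lra.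
Qed.

Lemma sqrt_lt_sq x r : 0 <= x -> sqrt x < r -> x < r * r.
Proof.
  intros H1 H2. pose proof (sqrt_sqrt x H1). pose proof (sqrt_pos x). nra.
Qed.

Lemma sq2_nonneg a b : 0 <= a * (a * 1) + b * (b * 1).
Proof. rewrite !Rmult_1_r. pose proof (Rle_0_sqr a). pose proof (Rle_0_sqr b). unfold Rsqr in *. lra. Qed.

Lemma on_model0 p : on_model 0 p <-> p2 p = 0.
Proof.
  unfold on_model. destruct (Rlt_dec 0 0); [lra|]. destruct (Rlt_dec 0 0); [lra|]. tauto.
Qed.

Lemma dk0 (a b : Mk 0) : dk 0 a b =
  sqrt ((p0 (proj1_sig a) - p0 (proj1_sig b)) ^ 2 + (p1 (proj1_sig a) - p1 (proj1_sig b)) ^ 2).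
Proof.
  unfold dk, model_dist. destruct (Rlt_dec 0 0); [lra|]. destruct (Rlt_dec 0 0); [lra|]. auto.
Qed.

Lemma model_ok_0 s D : 0 < s -> 0 < D -> D <= 2 * s ->
    exists b1 b2 b3 : Mk 0,
      dk 0 b1 b2 = 2 * s /\ dk 0 b1 b3 = 2 * s /\ dk 0 b2 b3 = D /\
      ~ Rbar_le (circumradius (dk 0) b1 b2 b3) (Finite s).
Proof.
  intros Hs HD HD2.
  set (u := 2 * s - D * D / (4 * s)).
  assert (Hu : u * (4 * s) = 8 * s * s - D * D) by (unfold u; field; lra).
  assert (Hv0 : 0 <= 4 * s * s - u * u).
  { assert (u <= 2 * s) by nra. assert (- 2 * s <= u) by nra. nra. }
  set (v := sqrt (4 * s * s - u * u)).
  assert (Hv : v * v = 4 * s * s - u * u) by (apply sqrt_sqrt; auto).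
  assert (O1 : on_model 0 (0, 0, 0)) by (apply on_model0; reflexivity).
  assert (O2 : on_model 0 (2 * s, 0, 0)) by (apply on_model0; reflexivity).
  assert (O3 : on_model 0 (u, v, 0)) by (apply on_model0; reflexivity).
  exists (exist _ _ O1), (exist _ _ O2), (exist _ _ O3).
  rewrite !dk0; simpl; unfold p0, p1; simpl.
  split; [|split; [|split]].
  - apply sqrt_lem_1; nra.
  - apply sqrt_lem_1; nra.
  - apply sqrt_lem_1; nra.
  - intro H. set (eps := Rmin s (D * D / (48 * s))).
    assert (He : 0 < eps).
    { unfold eps; apply Rmin_pos; auto. apply Rdiv_lt_0_compat; nra. }
    assert (He1 : eps <= s) by apply Rmin_l.
    assert (He2 : eps * (48 * s) <= D * D).
    { assert (eps <= D * D / (48 * s)) by apply Rmin_r.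
      apply Rmult_le_compat_r with (r := 48 * s) in H0; [|lra].
      unfold Rdiv in H0. rewrite Rmult_assoc, Rinv_l, Rmult_1_r in H0 by lra. lra. }
    destruct (circ_small 0 _ _ _ s H eps He) as (c & H1 & H2 & H3).
    rewrite dk0 in H1, H2, H3. simpl in H1, H2, H3. unfold p0, p1 in *. simpl in *.
    destruct c as [[[c0 c1] c2] Hc]. simpl in *.
    clearbody u v eps.
    apply sqrt_lt_sq in H1; [|apply sq2_nonneg]. apply sqrt_lt_sq in H2; [|apply sq2_nonneg].
    apply sqrt_lt_sq in H3; [|apply sq2_nonneg].
    assert (K : D * D / 4 <= 2 * ((c0 - s) ^ 2 + c1 ^ 2) + 2 * ((c0 - u / 2) ^ 2 + (c1 - v / 2) ^ 2)).
    { assert (Hm : D * D / 4 = (s - u / 2) ^ 2 + (v / 2) ^ 2).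
      { apply Rminus_diag_uniq.
        replace (D * D / 4 - ((s - u / 2) ^ 2 + (v / 2) ^ 2)) with
          (((D * D - 8 * s * s + u * (4 * s)) + (4 * s * s - u * u - v * v)) / 4) by field.
        rewrite Hu, Hv. field. }
      rewrite Hm.
      assert (2 * ((c0 - s) ^ 2 + c1 ^ 2) + 2 * ((c0 - u / 2) ^ 2 + (c1 - v / 2) ^ 2)
        - ((s - u / 2) ^ 2 + (v / 2) ^ 2) = (2 * c0 - s - u / 2) ^ 2 + (2 * c1 - v / 2) ^ 2) by ring.
      pose proof (pow2_ge_0 (2 * c0 - s - u / 2)). pose proof (pow2_ge_0 (2 * c1 - v / 2)). lra. }
    assert (EX : (c0 - s) ^ 2 + c1 ^ 2 = ((c0 - 0) * ((c0 - 0) * 1) + (c1 - 0) * ((c1 - 0) * 1)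
       + (c0 - 2 * s) * ((c0 - 2 * s) * 1) + (c1 - 0) * ((c1 - 0) * 1)) / 2 - s * s) by field.
    assert (EY : (c0 - u / 2) ^ 2 + (c1 - v / 2) ^ 2 = ((c0 - 0) * ((c0 - 0) * 1) + (c1 - 0) * ((c1 - 0) * 1)
       + (c0 - u) * ((c0 - u) * 1) + (c1 - v) * ((c1 - v) * 1)) / 2 - (u * u + v * v) / 4) by field.
    rewrite Hv in EY.
    assert (eps * eps <= s * eps) by nra.
    nra.
Qed.

Definition lin3 (a b c : R) (U V W : R3) : R3 :=
  (a * p0 U + b * p0 V + c * p0 W, a * p1 U + b * p1 V + c * p1 W, a * p2 U + b * p2 V + c * p2 W).

Lemma dot_lin3 a b c U V W :
  euclid_dot (lin3 a b c U V W) (lin3 a b c U V W) =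
  a*a*euclid_dot U U + b*b*euclid_dot V V + c*c*euclid_dot W W
  + 2*a*b*euclid_dot U V + 2*a*c*euclid_dot U W + 2*b*c*euclid_dot V W.
Proof. unfold euclid_dot, lin3, p0, p1, p2; simpl. ring. Qed.

Lemma dot_sym U V : euclid_dot U V = euclid_dot V U.
Proof. unfold euclid_dot. ring. Qed.

Lemma dot_nonneg U : 0 <= euclid_dot U U.
Proof. unfold euclid_dot. nra. Qed.

Lemma sph_alg (B1 B2 B3 C : R3) k cb cd :
  euclid_dot C C = 1 -> euclid_dot B1 B1 = 1 -> euclid_dot B2 B2 = 1 -> euclid_dot B3 B3 = 1 ->
  euclid_dot B1 B2 = 2*k*k - 1 -> euclid_dot B1 B3 = 2*k*k - 1 -> euclid_dot B2 B3 = cd ->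
  0 < k -> cb < euclid_dot C B1 -> cb < euclid_dot C B2 -> cb < euclid_dot C B3 ->
  2 - 2 * cd < 32 * k * (k - cb).
Proof.
  intros HC H1 H2 H3 H12 H13 H23 Hk c1 c2 c3.
  pose proof (dot_lin3 (2*k) (-1) (-1) C B1 B2) as EX.
  pose proof (dot_lin3 (2*k) (-1) (-1) C B1 B3) as EY.
  pose proof (dot_lin3 (4*k) (-2) (-1) C B1 B2) as E0.
  (* X + Y = 4kC - 2B1 - B2 - B3 ; use a 4-term identity instead *)
  assert (Hpar : euclid_dot (lin3 1 (-1) 0 B2 B3 B3) (lin3 1 (-1) 0 B2 B3 B3) <=
     2 * euclid_dot (lin3 (2*k) (-1) (-1) C B1 B2) (lin3 (2*k) (-1) (-1) C B1 B2) +
     2 * euclid_dot (lin3 (2*k) (-1) (-1) C B1 B3) (lin3 (2*k) (-1) (-1) C B1 B3)).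
  { set (Z := (4*k*p0 C - 2*p0 B1 - p0 B2 - p0 B3, 4*k*p1 C - 2*p1 B1 - p1 B2 - p1 B3,
              4*k*p2 C - 2*p2 B1 - p2 B2 - p2 B3) : R3).
    pose proof (dot_nonneg Z).
    assert (E : 2 * euclid_dot (lin3 (2*k) (-1) (-1) C B1 B2) (lin3 (2*k) (-1) (-1) C B1 B2) +
     2 * euclid_dot (lin3 (2*k) (-1) (-1) C B1 B3) (lin3 (2*k) (-1) (-1) C B1 B3)
     - euclid_dot (lin3 1 (-1) 0 B2 B3 B3) (lin3 1 (-1) 0 B2 B3 B3) = euclid_dot Z Z).
    { unfold Z, euclid_dot, lin3, p0, p1, p2; simpl. ring. }
    lra. }
  rewrite !dot_lin3 in Hpar.
  rewrite HC, H1, H2, H3, H12, H13, H23 in Hpar.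
  assert (k * cb < k * euclid_dot C B1) by nra.
  assert (k * cb < k * euclid_dot C B2) by nra.
  assert (k * cb < k * euclid_dot C B3) by nra.
  nra.
Qed.

Definition sc (r : R) (P : R3) : R3 := (r * p0 P, r * p1 P, r * p2 P).

Lemma dot_sc r q P Q : euclid_dot (sc r P) (sc q Q) = r * q * euclid_dot P Q.
Proof. unfold euclid_dot, sc, p0, p1, p2; simpl. ring. Qed.

Lemma unit_dot_bound P Q : euclid_dot P P = 1 -> euclid_dot Q Q = 1 ->
  -1 <= euclid_dot P Q <= 1.
Proof.
  intros HP HQ. pose proof (dot_lin3 1 1 0 P Q Q). pose proof (dot_lin3 1 (-1) 0 P Q Q).
  pose proof (dot_nonneg (lin3 1 1 0 P Q Q)). pose proof (dot_nonneg (lin3 1 (-1) 0 P Q Q)).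
  rewrite HP, HQ in *. lra.
Qed.

Section Sphere.
Variable kappa : R.
Hypothesis Hk : 0 < kappa.

Let lam := sqrt kappa.
Lemma lam_pos : 0 < lam. Proof. apply sqrt_lt_R0; auto. Qed.
Lemma lam_sq : lam * lam = kappa. Proof. apply sqrt_sqrt; lra. Qed.

Lemma on_model_pos p : on_model kappa p <-> euclid_dot p p = / kappa.
Proof. unfold on_model. destruct (Rlt_dec 0 kappa); [tauto|lra]. Qed.

Lemma dk_pos (a b : Mk kappa) :
  dk kappa a b = / lam * acos (kappa * euclid_dot (proj1_sig a) (proj1_sig b)).
Proof. unfold dk, model_dist. destruct (Rlt_dec 0 kappa); [auto|lra]. Qed.

Lemma sc_on P : euclid_dot P P = 1 -> on_model kappa (sc (/ lam) P).
Proof.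
  intro H. apply on_model_pos. rewrite dot_sc, H, <- lam_sq.
  pose proof lam_pos. field. lra.
Qed.

Lemma sc_dot P Q : kappa * euclid_dot (sc (/ lam) P) (sc (/ lam) Q) = euclid_dot P Q.
Proof. rewrite dot_sc, <- lam_sq. pose proof lam_pos. field. lra. Qed.

Lemma c_dot c Q : kappa * euclid_dot c (sc (/ lam) Q) = euclid_dot (sc lam c) Q.
Proof.
  rewrite <- lam_sq. pose proof lam_pos.
  unfold euclid_dot, sc, p0, p1, p2; simpl. field. lra.
Qed.

Lemma c_unit c : euclid_dot c c = / kappa -> euclid_dot (sc lam c) (sc lam c) = 1.
Proof.
  intro H. rewrite dot_sc, H, <- lam_sq. pose proof lam_pos. field. lra.
Qed.

Lemma model_ok_pos s D : 0 < s -> 0 < D -> D <= 2 * s -> s * sqrt kappa < PI / 4 ->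
    exists b1 b2 b3 : Mk kappa,
      dk kappa b1 b2 = 2 * s /\ dk kappa b1 b3 = 2 * s /\ dk kappa b2 b3 = D /\
      (exists c : Mk kappa,
        dk kappa c b1 < PI / (2 * sqrt kappa) /\
        dk kappa c b2 < PI / (2 * sqrt kappa) /\
        dk kappa c b3 < PI / (2 * sqrt kappa)) /\
      ~ Rbar_le (circumradius (dk kappa) b1 b2 b3) (Finite s).
Proof.
  intros Hs HD HD2 Hsk. fold lam in Hsk |- *.
  pose proof lam_pos as Hl. pose proof PI_RGT_0 as HPI.
  set (al := lam * s). set (de := lam * D).
  assert (Hal : 0 < al) by (unfold al; nra).
  assert (Hde : 0 < de) by (unfold de; nra).
  assert (Hde2 : de <= 2 * al) by (unfold de, al; nra).
  assert (Hal4 : al < PI / 4) by (unfold al; lra).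
  set (c2 := cos (2 * al)). set (s2 := sin (2 * al)).
  assert (Hs2 : 0 < s2) by (apply sin_gt_0; lra).
  assert (Hcs : s2 * s2 + c2 * c2 = 1) by (pose proof (sin2_cos2 (2 * al)); unfold Rsqr in *; auto).
  assert (Hcd1 : cos de < 1).
  { rewrite <- cos_0. apply cos_decreasing_1; lra. }
  assert (Hcd4 : c2 * c2 - s2 * s2 < cos de).
  { unfold c2, s2. rewrite <- cos_2a. replace (2 * (2 * al)) with (4 * al) by ring.
    apply cos_decreasing_1; lra. }
  set (a := (cos de - c2 * c2) / s2).
  assert (Ha : a * s2 = cos de - c2 * c2) by (unfold a; field; lra).
  assert (Ha2 : 0 <= s2 * s2 - a * a).
  { assert (Hb : (a * s2) * (a * s2) <= (s2 * s2) * (s2 * s2)) by (rewrite Ha; nra).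
    nra. }
  set (bb := sqrt (s2 * s2 - a * a)).
  assert (Hbb : bb * bb = s2 * s2 - a * a) by (apply sqrt_sqrt; auto).
  set (B1 := (1, 0, 0) : R3). set (B2 := (c2, s2, 0) : R3). set (B3 := (c2, a, bb) : R3).
  assert (U1 : euclid_dot B1 B1 = 1) by (unfold euclid_dot, B1, p0, p1, p2; simpl; ring).
  assert (U2 : euclid_dot B2 B2 = 1) by (unfold euclid_dot, B2, p0, p1, p2; simpl; nra).
  assert (U3 : euclid_dot B3 B3 = 1) by (unfold euclid_dot, B3, p0, p1, p2; simpl; nra).
  assert (D12 : euclid_dot B1 B2 = c2) by (unfold euclid_dot, B1, B2, p0, p1, p2; simpl; ring).
  assert (D13 : euclid_dot B1 B3 = c2) by (unfold euclid_dot, B1, B3, p0, p1, p2; simpl; ring).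
  assert (D23 : euclid_dot B2 B3 = cos de) by (unfold euclid_dot, B2, B3, p0, p1, p2; simpl; nra).
  set (b1 := exist _ _ (sc_on B1 U1) : Mk kappa).
  set (b2 := exist _ _ (sc_on B2 U2) : Mk kappa).
  set (b3 := exist _ _ (sc_on B3 U3) : Mk kappa).
  assert (E2s : / lam * acos c2 = 2 * s).
  { unfold c2. rewrite acos_cos by lra. unfold al. field. lra. }
  exists b1, b2, b3.
  split; [|split; [|split; [|split]]].
  - rewrite dk_pos. simpl. rewrite sc_dot, D12. exact E2s.
  - rewrite dk_pos. simpl. rewrite sc_dot, D13. exact E2s.
  - rewrite dk_pos. simpl. rewrite sc_dot, D23. rewrite acos_cos by lra. unfold de. field. lra.
  - exists b1. rewrite !dk_pos. simpl. rewrite !sc_dot, U1, D12, D13.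
    rewrite acos_1. fold lam.
    assert (Hp : 2 * s < PI / (2 * lam)).
    { apply Rmult_lt_reg_r with lam; auto. unfold Rdiv. rewrite Rmult_assoc, Rinv_mult.
      replace (PI * (/ 2 * / lam) * lam) with (PI / 2) by (field; lra). unfold al in Hal4. nra. }
    rewrite E2s. split; [|split]; try lra.
  - intro H.
    set (k := cos al).
    assert (Hk0 : 0 < k) by (apply cos_gt_0; lra).
    assert (Hk1 : k <= 1) by apply COS_bound.
    assert (Hc2 : c2 = 2 * k * k - 1) by (unfold c2, k; apply cos_2a_cos).
    set (g := (2 - 2 * cos de) / 32).
    assert (Hg : 0 < g) by (unfold g; lra).
    destruct (cont_eps cos al (continuity_cos al) g Hg) as (eta & Heta & Hc).
    set (eps := Rmin s (eta / (2 * lam))).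
    assert (He : 0 < eps).
    { unfold eps; apply Rmin_pos; auto. apply Rdiv_lt_0_compat; lra. }
    assert (He1 : eps <= s) by apply Rmin_l.
    assert (He2 : lam * eps < eta).
    { assert (eps <= eta / (2 * lam)) by apply Rmin_r.
      assert (lam * eps <= lam * (eta / (2 * lam))) by (apply Rmult_le_compat_l; lra).
      replace (lam * (eta / (2 * lam))) with (eta / 2) in H1 by (field; lra). lra. }
    set (be := lam * (s + eps)).
    assert (Hbe : be = al + lam * eps) by (unfold be, al; ring).
    assert (Hbe2 : be <= 2 * al) by (unfold al in *; nra).
    assert (Hkb : Rabs (cos be - k) < g) by (apply Hc; rewrite Hbe; rewrite Rabs_right; nra).
    destruct (circ_small kappa b1 b2 b3 s H eps He) as (c & H1 & H2 & H3).
    destruct c as [c Hc0]. pose proof Hc0 as Hcu. apply on_model_pos, c_unit in Hcu.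
    assert (Step : forall B, euclid_dot B B = 1 -> forall Hb : on_model kappa (sc (/ lam) B),
       dk kappa (exist _ c Hc0) (exist _ _ Hb) < s + eps -> cos be < euclid_dot (sc lam c) B).
    { intros B HB Hb Hlt. rewrite dk_pos in Hlt. simpl in Hlt. rewrite c_dot in Hlt.
      apply acos_lt.
      - apply unit_dot_bound; auto.
      - split; [|lra]. unfold be; nra.
      - unfold be. apply Rmult_lt_reg_l with (/ lam).
        + apply Rinv_0_lt_compat; auto.
        + replace (/ lam * (lam * (s + eps))) with (s + eps) by (field; lra). exact Hlt. }
    apply Step in H1; auto. apply Step in H2; auto. apply Step in H3; auto.
    pose proof (sph_alg B1 B2 B3 (sc lam c) k (cos be) (cos de) Hcu U1 U2 U3) as A.
    rewrite <- Hc2 in A. specialize (A D12 D13 D23 Hk0 H1 H2 H3).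
    apply Rabs_def2 in Hkb as [Hkb1 Hkb2].
    assert (k * (k - cos be) < g) by nra.
    unfold g in *. lra.
Qed.
End Sphere.

Definition lin2 (a b : R) (U V : R3) : R3 :=
  (a * p0 U + b * p0 V, a * p1 U + b * p1 V, a * p2 U + b * p2 V).

Lemma ldot_lin2l a b U V W :
  lorentz_dot (lin2 a b U V) W = a * lorentz_dot U W + b * lorentz_dot V W.
Proof. unfold lorentz_dot, lin2, p0, p1, p2; simpl. ring. Qed.

Lemma ldot_sym U V : lorentz_dot U V = lorentz_dot V U.
Proof. unfold lorentz_dot. ring. Qed.

Lemma ldot_lin2r a b U V W :
  lorentz_dot W (lin2 a b U V) = a * lorentz_dot W U + b * lorentz_dot W V.
Proof. rewrite ldot_sym, ldot_lin2l, (ldot_sym U), (ldot_sym V). ring. Qed.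

Lemma neg_orth Q U : lorentz_dot Q Q = 1 -> 0 < p0 Q -> lorentz_dot U Q = 0 ->
  lorentz_dot U U <= 0.
Proof.
  unfold lorentz_dot. destruct Q as [[q0 q1] q2], U as [[u0 u1] u2]; unfold p0, p1, p2; simpl.
  intros H1 H2 H3.
  assert (E : (q0 * u0) * (q0 * u0) = (q1 * u1 + q2 * u2) * (q1 * u1 + q2 * u2)) by (f_equal; lra).
  assert (L : (q1 * u1 + q2 * u2) * (q1 * u1 + q2 * u2) <= (q1*q1 + q2*q2) * (u1*u1 + u2*u2))
    by (pose proof (pow2_ge_0 (q1 * u2 - q2 * u1)); nra).
  assert (q0 * q0 * (u0 * u0) <= q0 * q0 * (u1 * u1 + u2 * u2)) by nra.
  assert (u0 * u0 <= u1 * u1 + u2 * u2).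
  { apply Rmult_le_reg_l with (q0 * q0); nra. }
  lra.
Qed.

Lemma lorentz_cs Q V W : lorentz_dot Q Q = 1 -> 0 < p0 Q ->
  lorentz_dot V Q = 0 -> lorentz_dot W Q = 0 ->
  lorentz_dot V W * lorentz_dot V W <= lorentz_dot V V * lorentz_dot W W.
Proof.
  intros HQ HQ0 HV HW.
  assert (Orth : forall a b, lorentz_dot (lin2 a b V W) (lin2 a b V W) <= 0).
  { intros a b. apply (neg_orth Q); auto. rewrite ldot_lin2l, HV, HW. ring. }
  assert (Exp : forall a b, lorentz_dot (lin2 a b V W) (lin2 a b V W) =
     a * a * lorentz_dot V V + 2 * a * b * lorentz_dot V W + b * b * lorentz_dot W W).
  { intros a b. rewrite ldot_lin2l, !ldot_lin2r, (ldot_sym W V). ring. }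
  set (A := lorentz_dot V V) in *. set (B := lorentz_dot W W) in *. set (C := lorentz_dot V W) in *.
  assert (HA : A <= 0) by (specialize (Orth 1 0); rewrite Exp in Orth; nra).
  assert (HB : B <= 0) by (specialize (Orth 0 1); rewrite Exp in Orth; nra).
  destruct (Req_dec B 0) as [B0|B0].
  - destruct (Req_dec C 0) as [C0|C0].
    + rewrite C0, B0. lra.
    + exfalso. specialize (Orth 1 ((1 - A) / (2 * C))). rewrite Exp, B0 in Orth.
      replace (1 * 1 * A + 2 * 1 * ((1 - A) / (2 * C)) * C + (1 - A) / (2 * C) * ((1 - A) / (2 * C)) * 0)
        with 1 in Orth by (field; auto). lra.
  - specialize (Orth B (- C)). rewrite Exp in Orth.
    assert (B * (A * B - C * C) <= 0) by nra.
    assert (0 <= A * B - C * C).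
    { apply Rnot_lt_le; intro Hlt. assert (0 < B * (C * C - A * B)) by nra. nra. }
    lra.
Qed.

Lemma lorentz_tri P Q R a b : lorentz_dot Q Q = 1 -> 0 < p0 Q ->
  lorentz_dot P P = 1 -> lorentz_dot R R = 1 ->
  lorentz_dot P Q = a -> lorentz_dot Q R = b -> 1 <= a * b ->
  lorentz_dot P R <= 2 * a * b - 1.
Proof.
  intros HQ HQ0 HP HR Ha Hb Hab.
  set (V := lin2 1 (- a) P Q). set (W := lin2 1 (- b) R Q).
  assert (HV : lorentz_dot V Q = 0) by (unfold V; rewrite ldot_lin2l, HQ, Ha; ring).
  assert (HW : lorentz_dot W Q = 0) by (unfold W; rewrite ldot_lin2l, HQ, (ldot_sym R Q), Hb; ring).
  pose proof (lorentz_cs Q V W HQ HQ0 HV HW) as CS.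
  assert (EV : lorentz_dot V V = 1 - a * a).
  { unfold V. rewrite ldot_lin2l, !ldot_lin2r, HP, HQ, Ha, (ldot_sym Q P), Ha. ring. }
  assert (EW : lorentz_dot W W = 1 - b * b).
  { unfold W. rewrite ldot_lin2l, !ldot_lin2r, HR, HQ, (ldot_sym R Q), Hb. ring. }
  assert (EVW : lorentz_dot V W = lorentz_dot P R - a * b).
  { unfold V, W. rewrite ldot_lin2l, !ldot_lin2r.
    assert (lorentz_dot Q P = a) by (rewrite ldot_sym; auto).
    assert (lorentz_dot R Q = b) by (rewrite ldot_sym; auto).
    rewrite ?HQ, ?Ha, ?Hb, ?H, ?H0. ring. }
  rewrite EV, EW, EVW in CS.
  assert ((1 - a * a) * (1 - b * b) <= (a * b - 1) * (a * b - 1)) by (pose proof (pow2_ge_0 (a - b)); nra).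
  nra.
Qed.

Lemma rev_cs P Q : lorentz_dot P P = 1 -> lorentz_dot Q Q = 1 -> 0 < p0 P -> 0 < p0 Q ->
  1 <= lorentz_dot P Q.
Proof.
  unfold lorentz_dot. destruct P as [[x0 x1] x2], Q as [[y0 y1] y2]; unfold p0, p1, p2; simpl.
  intros H1 H2 H3 H4.
  assert (L : (1 + x1 * y1 + x2 * y2) * (1 + x1 * y1 + x2 * y2) <= (x0 * y0) * (x0 * y0)).
  { assert (x0 * x0 = 1 + x1 * x1 + x2 * x2) by lra. assert (y0 * y0 = 1 + y1 * y1 + y2 * y2) by lra.
    replace ((x0 * y0) * (x0 * y0)) with ((x0 * x0) * (y0 * y0)) by ring.
    rewrite H, H0. pose proof (pow2_ge_0 (x1 * y2 - x2 * y1)).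
    pose proof (pow2_ge_0 (x1 - y1)). pose proof (pow2_ge_0 (x2 - y2)). nra. }
  assert (0 < x0 * y0) by nra. nra.
Qed.

Lemma hyp_alg (B1 B2 B3 C : R3) k cb cd :
  lorentz_dot C C = 1 -> lorentz_dot B1 B1 = 1 -> lorentz_dot B2 B2 = 1 -> lorentz_dot B3 B3 = 1 ->
  0 < p0 C -> 0 < p0 B1 -> 0 < p0 B2 -> 0 < p0 B3 ->
  lorentz_dot B1 B2 = 2*k*k - 1 -> lorentz_dot B1 B3 = 2*k*k - 1 -> lorentz_dot B2 B3 = cd ->
  0 < k -> lorentz_dot C B1 < cb -> lorentz_dot C B2 < cb -> lorentz_dot C B3 < cb ->
  cd - 1 < 8 * (cb * cb - k * k).
Proof.
  intros HC H1 H2 H3 P0 P1 P2 P3 H12 H13 H23 Hk c1 c2 c3.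
  set (M := lin2 (/ (2 * k)) (/ (2 * k)) B1 B2).
  set (M' := lin2 (/ (2 * k)) (/ (2 * k)) B1 B3).
  assert (Hik : 0 < / (2 * k)) by (apply Rinv_0_lt_compat; lra).
  assert (MM : lorentz_dot M M = 1).
  { unfold M. rewrite ldot_lin2l, !ldot_lin2r, H1, H2, H12, (ldot_sym B2 B1), H12. field. lra. }
  assert (MM' : lorentz_dot M' M' = 1).
  { unfold M'. rewrite ldot_lin2l, !ldot_lin2r, H1, H3, H13, (ldot_sym B3 B1), H13. field. lra. }
  assert (M0 : 0 < p0 M) by (unfold M, lin2, p0; simpl; fold (p0 B1) (p0 B2); nra).
  assert (M0' : 0 < p0 M') by (unfold M', lin2, p0; simpl; fold (p0 B1) (p0 B3); nra).
  assert (EM : lorentz_dot M M' = (4 * k * k - 1 + cd) / (4 * k * k)).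
  { unfold M, M'. rewrite ldot_lin2l, !ldot_lin2r, H1, H13, (ldot_sym B2 B1), H12, H23. field. lra. }
  assert (CM : lorentz_dot M C = (lorentz_dot C B1 + lorentz_dot C B2) / (2 * k)).
  { unfold M. rewrite ldot_lin2l, (ldot_sym B1 C), (ldot_sym B2 C). field. lra. }
  assert (CM' : lorentz_dot C M' = (lorentz_dot C B1 + lorentz_dot C B3) / (2 * k)).
  { unfold M'. rewrite ldot_lin2r. field. lra. }
  assert (A1 : 1 <= lorentz_dot M C) by (apply rev_cs; auto).
  assert (A2 : 1 <= lorentz_dot C M') by (apply rev_cs; auto).
  assert (T := lorentz_tri M C M' (lorentz_dot M C) (lorentz_dot C M') HC P0 MM MM' eq_refl eq_refl).
  assert (1 <= lorentz_dot M C * lorentz_dot C M') by nra.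
  specialize (T H).
  assert (B1' : lorentz_dot M C * (2 * k) < 2 * cb).
  { rewrite CM. field_simplify; lra. }
  assert (B2' : lorentz_dot C M' * (2 * k) < 2 * cb).
  { rewrite CM'. field_simplify; lra. }
  rewrite EM in T.
  assert (T2 : 4 * k * k - 1 + cd <= (2 * (lorentz_dot M C * lorentz_dot C M') - 1) * (4 * k * k)).
  { apply Rmult_le_compat_r with (r := 4 * k * k) in T; [|nra].
    replace ((4 * k * k - 1 + cd) / (4 * k * k) * (4 * k * k)) with (4 * k * k - 1 + cd) in T
      by (field; lra). lra. }
  assert ((lorentz_dot M C * (2 * k)) * (lorentz_dot C M' * (2 * k)) < 2 * cb * (2 * cb)).
  { apply Rmult_le_0_lt_compat; nra. }
  nra.
Qed.

Definition ch x := (exp x + exp (- x)) / 2.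
Definition sh x := (exp x - exp (- x)) / 2.

Lemma ch_cont : continuity ch. Proof. unfold ch. reg. Qed.

Lemma ch_sh x : ch x * ch x - sh x * sh x = 1.
Proof. unfold ch, sh. rewrite exp_Ropp. pose proof (exp_pos x). field. lra. Qed.

Lemma ch2 x : ch (2 * x) = 2 * ch x * ch x - 1.
Proof.
  unfold ch. replace (2 * x) with (x + x) by ring. replace (- (x + x)) with (- x + - x) by ring.
  rewrite !exp_plus, exp_Ropp. pose proof (exp_pos x). field. lra.
Qed.

Lemma ch2' x : ch (2 * x) = ch x * ch x + sh x * sh x.
Proof. rewrite ch2. pose proof (ch_sh x). lra. Qed.

Lemma ch_ge1 x : 1 <= ch x.
Proof.
  unfold ch. rewrite exp_Ropp. pose proof (exp_pos x).
  assert (exp x + / exp x - 2 = (exp x - 1) * (exp x - 1) / exp x) by (field; lra).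
  assert (0 <= (exp x - 1) * (exp x - 1) / exp x).
  { unfold Rdiv; apply Rmult_le_pos; [apply Rle_0_sqr | left; apply Rinv_0_lt_compat; auto]. }
  lra.
Qed.

Lemma sh_pos x : 0 < x -> 0 < sh x.
Proof.
  intro H. unfold sh. pose proof (exp_increasing (- x) x ltac:(lra)). lra.
Qed.

Lemma sh_nonneg x : 0 <= x -> 0 <= sh x.
Proof.
  intro H. destruct (Req_dec x 0) as [->|]. - unfold sh. rewrite Ropp_0. lra.
  - apply Rlt_le, sh_pos; lra.
Qed.

Lemma ch_lt x y : 0 <= x -> x < y -> ch x < ch y.
Proof.
  intros H1 H2. unfold ch. rewrite !exp_Ropp.
  pose proof (exp_increasing x y H2). pose proof (exp_pos x).
  assert (1 <= exp x) by (rewrite <- exp_0; destruct (Req_dec x 0) as [->|];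
     [lra| left; apply exp_increasing; lra]).
  assert (exp y + / exp y - (exp x + / exp x) = (exp y - exp x) * (exp x * exp y - 1) / (exp x * exp y))
    by (field; lra).
  assert (0 < (exp y - exp x) * (exp x * exp y - 1) / (exp x * exp y)).
  { apply Rdiv_lt_0_compat; apply Rmult_lt_0_compat; try lra. assert (exp x * 1 < exp x * exp y) by (apply Rmult_lt_compat_l; lra). lra. }
  lra.
Qed.

Lemma arcosh_ch u : 0 <= u -> arcosh (ch u) = u.
Proof.
  intro H. unfold arcosh. pose proof (ch_sh u).
  replace (ch u * ch u - 1) with (sh u * sh u) by lra.
  rewrite sqrt_square by (apply sh_nonneg; auto).
  replace (ch u + sh u) with (exp u) by (unfold ch, sh; field). apply ln_exp.
Qed.

Lemma arcosh_le x y : 1 <= x -> x <= y -> arcosh x <= arcosh y.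
Proof.
  intros H1 H2. unfold arcosh. apply ln_le.
  - pose proof (sqrt_pos (x * x - 1)). lra.
  - apply Rplus_le_compat; auto. apply sqrt_le_1; nra.
Qed.

Lemma arcosh_lt x b : 1 <= x -> 0 <= b -> arcosh x < b -> x < ch b.
Proof.
  intros H1 H2 H3. apply Rnot_le_lt; intro H4.
  pose proof (arcosh_le (ch b) x (ch_ge1 b) H4). rewrite arcosh_ch in H; auto. lra.
Qed.

Lemma ldot_sc r q P Q : lorentz_dot (sc r P) (sc q Q) = r * q * lorentz_dot P Q.
Proof. unfold lorentz_dot, sc, p0, p1, p2; simpl. ring. Qed.

Section Hyper.
Variable kappa : R.
Hypothesis Hk : kappa < 0.

Let lam := sqrt (- kappa).
Lemma hlam_pos : 0 < lam. Proof. apply sqrt_lt_R0; lra. Qed.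
Lemma hlam_sq : lam * lam = - kappa. Proof. apply sqrt_sqrt; lra. Qed.

Lemma on_model_neg p : on_model kappa p <-> lorentz_dot p p = / (- kappa) /\ 0 < p0 p.
Proof.
  unfold on_model. destruct (Rlt_dec 0 kappa); [lra|]. destruct (Rlt_dec kappa 0); [tauto|lra].
Qed.

Lemma dk_neg (a b : Mk kappa) :
  dk kappa a b = / lam * arcosh (- kappa * lorentz_dot (proj1_sig a) (proj1_sig b)).
Proof.
  unfold dk, model_dist. destruct (Rlt_dec 0 kappa); [lra|]. destruct (Rlt_dec kappa 0); [auto|lra].
Qed.

Lemma hsc_on P : lorentz_dot P P = 1 -> 0 < p0 P -> on_model kappa (sc (/ lam) P).
Proof.
  intros H H0. apply on_model_neg. pose proof hlam_pos. split.
  - rewrite ldot_sc, H, <- hlam_sq. field. lra.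
  - unfold sc, p0 at 1; simpl. fold (p0 P). apply Rmult_lt_0_compat; auto.
    apply Rinv_0_lt_compat; auto.
Qed.

Lemma hsc_dot P Q : - kappa * lorentz_dot (sc (/ lam) P) (sc (/ lam) Q) = lorentz_dot P Q.
Proof. rewrite ldot_sc, <- hlam_sq. pose proof hlam_pos. field. lra. Qed.

Lemma hc_dot c Q : - kappa * lorentz_dot c (sc (/ lam) Q) = lorentz_dot (sc lam c) Q.
Proof.
  rewrite <- hlam_sq. pose proof hlam_pos.
  unfold lorentz_dot, sc, p0, p1, p2; simpl. field. lra.
Qed.

Lemma hc_unit c : on_model kappa c ->
  lorentz_dot (sc lam c) (sc lam c) = 1 /\ 0 < p0 (sc lam c).
Proof.
  intros H. apply on_model_neg in H as [H1 H2]. pose proof hlam_pos. split.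
  - rewrite ldot_sc, H1, <- hlam_sq. field. lra.
  - unfold sc, p0 at 1; simpl. fold (p0 c). nra.
Qed.

Lemma model_ok_neg s D : 0 < s -> 0 < D -> D <= 2 * s ->
    exists b1 b2 b3 : Mk kappa,
      dk kappa b1 b2 = 2 * s /\ dk kappa b1 b3 = 2 * s /\ dk kappa b2 b3 = D /\
      ~ Rbar_le (circumradius (dk kappa) b1 b2 b3) (Finite s).
Proof.
  intros Hs HD HD2.
  pose proof hlam_pos as Hl.
  set (al := lam * s). set (de := lam * D).
  assert (Hal : 0 < al) by (unfold al; nra).
  assert (Hde : 0 < de) by (unfold de; nra).
  assert (Hde2 : de <= 2 * al) by (unfold de, al; nra).
  set (c2 := ch (2 * al)). set (s2 := sh (2 * al)).
  assert (Hs2 : 0 < s2) by (apply sh_pos; lra).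
  assert (Hcs : c2 * c2 - s2 * s2 = 1) by apply ch_sh.
  assert (Hc2p : 1 <= c2) by apply ch_ge1.
  assert (Hcd1 : 1 < ch de).
  { replace 1 with (ch 0) by (unfold ch; rewrite Ropp_0, exp_0; field). apply ch_lt; lra. }
  assert (Hcd4 : ch de < c2 * c2 + s2 * s2).
  { unfold c2, s2. rewrite <- ch2'. apply ch_lt; lra. }
  set (a := (c2 * c2 - ch de) / s2).
  assert (Ha : a * s2 = c2 * c2 - ch de) by (unfold a; field; lra).
  assert (Ha2 : 0 <= s2 * s2 - a * a).
  { assert (Hb : (a * s2) * (a * s2) <= (s2 * s2) * (s2 * s2)) by (rewrite Ha; nra).
    nra. }
  set (bb := sqrt (s2 * s2 - a * a)).
  assert (Hbb : bb * bb = s2 * s2 - a * a) by (apply sqrt_sqrt; auto).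
  set (B1 := (1, 0, 0) : R3). set (B2 := (c2, s2, 0) : R3). set (B3 := (c2, a, bb) : R3).
  assert (U1 : lorentz_dot B1 B1 = 1) by (unfold lorentz_dot, B1, p0, p1, p2; simpl; ring).
  assert (U2 : lorentz_dot B2 B2 = 1) by (unfold lorentz_dot, B2, p0, p1, p2; simpl; nra).
  assert (U3 : lorentz_dot B3 B3 = 1) by (unfold lorentz_dot, B3, p0, p1, p2; simpl; nra).
  assert (P1 : 0 < p0 B1) by (unfold B1, p0; simpl; lra).
  assert (P2 : 0 < p0 B2) by (unfold B2, p0; simpl; lra).
  assert (P3 : 0 < p0 B3) by (unfold B3, p0; simpl; lra).
  assert (D12 : lorentz_dot B1 B2 = c2) by (unfold lorentz_dot, B1, B2, p0, p1, p2; simpl; ring).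
  assert (D13 : lorentz_dot B1 B3 = c2) by (unfold lorentz_dot, B1, B3, p0, p1, p2; simpl; ring).
  assert (D23 : lorentz_dot B2 B3 = ch de) by (unfold lorentz_dot, B2, B3, p0, p1, p2; simpl; nra).
  set (b1 := exist _ _ (hsc_on B1 U1 P1) : Mk kappa).
  set (b2 := exist _ _ (hsc_on B2 U2 P2) : Mk kappa).
  set (b3 := exist _ _ (hsc_on B3 U3 P3) : Mk kappa).
  assert (E2s : / lam * arcosh c2 = 2 * s).
  { unfold c2. rewrite arcosh_ch by lra. unfold al. field. lra. }
  exists b1, b2, b3.
  split; [|split; [|split]].
  - rewrite dk_neg. simpl. rewrite hsc_dot, D12. exact E2s.
  - rewrite dk_neg. simpl. rewrite hsc_dot, D13. exact E2s.
  - rewrite dk_neg. simpl. rewrite hsc_dot, D23. rewrite arcosh_ch by lra. unfold de. field. lra.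
  - intro H.
    set (k := ch al).
    assert (Hk1 : 1 <= k) by apply ch_ge1.
    assert (Hc2 : c2 = 2 * k * k - 1) by (unfold c2, k; apply ch2).
    set (g := Rmin 1 ((ch de - 1) / (8 * (2 * k + 1)))).
    assert (Hg : 0 < g).
    { unfold g. apply Rmin_pos; [lra|]. apply Rdiv_lt_0_compat; lra. }
    assert (Hg1 : g <= 1) by apply Rmin_l.
    assert (Hg2 : g * (8 * (2 * k + 1)) <= ch de - 1).
    { assert (g <= (ch de - 1) / (8 * (2 * k + 1))) by apply Rmin_r.
      apply Rmult_le_compat_r with (r := 8 * (2 * k + 1)) in H0; [|lra].
      replace ((ch de - 1) / (8 * (2 * k + 1)) * (8 * (2 * k + 1))) with (ch de - 1) in H0
        by (field; lra). lra. }
    destruct (cont_eps ch al (ch_cont al) g Hg) as (eta & Heta & Hc).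
    set (eps := Rmin s (eta / (2 * lam))).
    assert (He : 0 < eps).
    { unfold eps; apply Rmin_pos; auto. apply Rdiv_lt_0_compat; lra. }
    assert (He2 : lam * eps < eta).
    { assert (eps <= eta / (2 * lam)) by apply Rmin_r.
      assert (lam * eps <= lam * (eta / (2 * lam))) by (apply Rmult_le_compat_l; lra).
      replace (lam * (eta / (2 * lam))) with (eta / 2) in H1 by (field; lra). lra. }
    set (be := lam * (s + eps)).
    assert (Hbe : be = al + lam * eps) by (unfold be, al; ring).
    assert (Hkb : Rabs (ch be - k) < g) by (apply Hc; rewrite Hbe; rewrite Rabs_right; nra).
    destruct (circ_small kappa b1 b2 b3 s H eps He) as (c & H1 & H2 & H3).
    destruct c as [c Hc0]. pose proof (hc_unit c Hc0) as [Hcu Hcp].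
    assert (Step : forall B, lorentz_dot B B = 1 -> 0 < p0 B ->
       forall Hb : on_model kappa (sc (/ lam) B),
       dk kappa (exist _ c Hc0) (exist _ _ Hb) < s + eps -> lorentz_dot (sc lam c) B < ch be).
    { intros B HB HB0 Hb Hlt. rewrite dk_neg in Hlt. simpl in Hlt. rewrite hc_dot in Hlt.
      apply arcosh_lt.
      - apply rev_cs; auto.
      - unfold be; nra.
      - unfold be. apply Rmult_lt_reg_l with (/ lam).
        + apply Rinv_0_lt_compat; auto.
        + replace (/ lam * (lam * (s + eps))) with (s + eps) by (field; lra). exact Hlt. }
    apply Step in H1; auto. apply Step in H2; auto. apply Step in H3; auto.
    assert (Hk0 : 0 < k) by lra.
    pose proof (hyp_alg B1 B2 B3 (sc lam c) k (ch be) (ch de) Hcu U1 U2 U3 Hcp P1 P2 P3) as A.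
    rewrite <- Hc2 in A. specialize (A D12 D13 D23 Hk0 H1 H2 H3).
    apply Rabs_def2 in Hkb as [Hkb1 Hkb2].
    assert (ch be * ch be - k * k < (ch de - 1) / 8).
    { destruct (Rle_lt_dec (ch be) k).
      - assert (ch be * ch be <= k * k) by (pose proof (ch_ge1 be); nra). lra.
      - assert ((ch be - k) * (ch be + k) < g * (2 * k + 1)) by nra. nra. }
    lra.
Qed.
End Hyper.

Definition model_ok (kappa : R) : Prop :=
  forall s D, 0 < s -> 0 < D -> D <= 2 * s ->
    (0 < kappa -> s * sqrt kappa < PI / 4) ->
    exists b1 b2 b3 : Mk kappa,
      dk kappa b1 b2 = 2 * s /\ dk kappa b1 b3 = 2 * s /\ dk kappa b2 b3 = D /\
      (0 < kappa -> exists c : Mk kappa,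
        dk kappa c b1 < PI / (2 * sqrt kappa) /\
        dk kappa c b2 < PI / (2 * sqrt kappa) /\
        dk kappa c b3 < PI / (2 * sqrt kappa)) /\
      ~ Rbar_le (circumradius (dk kappa) b1 b2 b3) (Finite s).

Lemma glb_le_elem {X : Type} (f : X -> R) (x : X) :
  Rbar_le (Glb_Rbar (fun r => exists x, r = f x)) (Finite (f x)).
Proof.
  destruct (Glb_Rbar_correct (fun r => exists x, r = f x)) as [H _].
  apply H. eauto.
Qed.

Lemma tri_contra {X : Type} (d : X -> X -> R) kappa :
  is_metric d -> curv_ge d kappa -> model_ok kappa ->
  forall p q u u' s, 0 < s -> (0 < kappa -> s * sqrt kappa < PI / 4) ->
  d q p = s -> d q u = s -> d q u' = s -> d p u = 2 * s -> d p u' = 2 * s ->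
  u <> u' -> False.
Proof.
  intros [Hpos [Hz [Hsym Htri]]] Hc Hm p q u u' s Hs Hk H1 H2 H3 H4 H5 Hne.
  assert (HD : 0 < d u u').
  { destruct (Hpos u u') as [Hlt|Heq]; auto. exfalso; apply Hne; apply Hz; auto. }
  assert (HD2 : d u u' <= 2 * s).
  { pose proof (Htri u q u'). rewrite (Hsym u q) in H. lra. }
  destruct (Hm s (d u u') Hs HD HD2 Hk) as (b1 & b2 & b3 & E1 & E2 & E3 & Eb & Hn).
  apply Hn.
  apply Rbar_le_trans with (circumradius d p u u').
  - apply Hc; try lra. exact Eb.
  - unfold circumradius.
    pose proof (glb_le_elem (fun x => max3 (d x p) (d x u) (d x u')) q) as G.
    simpl in G. rewrite H1, H2, H3 in G. unfold max3 in G.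
    rewrite (Rmax_left s s) in G by lra. rewrite (Rmax_left s s) in G by lra. exact G.
Qed.

Section XS.
Variables (X : Type) (d : X -> X -> R) (kappa : R).
Hypothesis Hmet : is_metric d.
Hypothesis Hgeo : is_geodesic_space d.
Hypothesis Hcurv : curv_ge d kappa.
Hypothesis Hmod : model_ok kappa.

Lemma geo_point (a b : X) (s : R) : 0 <= s <= d a b ->
  exists w, d a w = s /\ d w b = d a b - s.
Proof.
  intros Hs. destruct (Hgeo a b) as (g & g0 & g1 & Hg).
  exists (g s). split.
  - rewrite <- g0 at 1. rewrite Hg by lra. rewrite Rabs_left1 by lra. lra.
  - rewrite <- g1 at 1. rewrite Hg by lra. rewrite Rabs_left1 by lra. lra.
Qed.

Variables (x y y' : X) (L h : R).
Hypothesis HL : d x y = L.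
Hypothesis HL' : d x y' = L.
Hypothesis Hh : 0 < h.
Hypothesis Hhk : 0 < kappa -> h * sqrt kappa < PI / 4.

Lemma kcond s : 0 < s -> s <= h -> (0 < kappa -> s * sqrt kappa < PI / 4).
Proof.
  intros H1 H2 Hk. specialize (Hhk Hk). pose proof (sqrt_pos kappa).
  assert (s * sqrt kappa <= h * sqrt kappa) by nra. lra.
Qed.

Lemma branch_contra z S s u u' :
  d x z = S -> d z y = L - S -> d z y' = L - S ->
  0 < s -> s <= S -> s <= L - S -> s <= h ->
  d z u = s -> d u y = L - S - s -> d z u' = s -> d u' y' = L - S - s ->
  u <> u' -> False.
Proof.
  destruct Hmet as [Hpos [Hz [Hsym Htri]]].
  intros Hxz Hzy Hzy' Hs HsS HsA Hsh Hu1 Hu2 Hu1' Hu2' Hne.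
  destruct (geo_point z x s) as (p & Hp1 & Hp2).
  { rewrite Hsym, Hxz. lra. }
  rewrite (Hsym z x), Hxz in Hp2.
  apply (tri_contra d kappa Hmet Hcurv Hmod p z u u' s Hs (kcond s Hs Hsh)); auto.
  - pose proof (Htri x p u). pose proof (Htri x u y). pose proof (Htri p z u).
    rewrite (Hsym x p) in *. rewrite (Hsym p z) in *. lra.
  - pose proof (Htri x p u'). pose proof (Htri x u' y'). pose proof (Htri p z u').
    rewrite (Hsym x p) in *. rewrite (Hsym p z) in *. lra.
Qed.

Lemma iter (n : nat) : forall z S,
  d x z = S -> d z y = L - S -> d z y' = L - S -> h <= S -> S <= L ->
  L - S <= INR n * h -> y = y'.
Proof.
  destruct Hmet as [Hpos [Hz [Hsym Htri]]].
  induction n as [|n IH]; intros z S Hxz Hzy Hzy' HhS HSL Hn.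
  - simpl in Hn. assert (d z y = 0) by lra. assert (d z y' = 0) by lra.
    apply Hz in H. apply Hz in H0. congruence.
  - rewrite S_INR in Hn.
    destruct (Rle_lt_dec (L - S) h) as [HA|HA].
    + destruct (Req_dec (L - S) 0) as [H0|H0].
      { assert (d z y = 0) by lra. assert (d z y' = 0) by lra.
        apply Hz in H. apply Hz in H1. congruence. }
      apply NNPP; intro Hne.
      apply (branch_contra z S (L - S) y y' Hxz Hzy Hzy'); try lra.
      * assert (Hd: d y y = 0) by (apply Hz; auto). lra.
      * assert (Hd: d y' y' = 0) by (apply Hz; auto). lra.
      * exact Hne.
    + destruct (geo_point z y h) as (u & Hu1 & Hu2). { rewrite Hzy. lra. }
      destruct (geo_point z y' h) as (u' & Hu1' & Hu2'). { rewrite Hzy'. lra. }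
      destruct (classic (u = u')) as [Heq|Hne].
      * subst u'. apply (IH u (S + h)); try lra.
        pose proof (Htri x z u). pose proof (Htri x u y). lra.
      * exfalso. apply (branch_contra z S h u u' Hxz Hzy Hzy'); try lra.
        exact Hne.
Qed.
End XS.

Theorem main_from_model (X : Type) (d : X -> X -> R) (kappa : R) :
  model_ok kappa ->
  is_metric d -> is_geodesic_space d -> curv_ge d kappa -> non_branching d.
Proof.
  intros Hm Hmet Hgeo Hc x y y' HL (t & Ht & z & [Hz1 Hz2] & [Hz1' Hz2']).
  pose proof Hmet as [Hpos [Hz [Hsym Htri]]].
  set (L := d x y) in *.
  destruct (Req_dec L 0) as [L0|L0].
  { assert (d x y = 0) by exact L0. assert (d x y' = 0) by lra.
    apply Hz in H. apply Hz in H0. congruence. }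
  assert (HLp : 0 < L) by (destruct (Hpos x y); [auto|exfalso; apply L0; auto]).
  set (h := Rmin (t * L) (PI / (8 * (sqrt kappa + 1)))).
  pose proof (sqrt_pos kappa) as Hsq. pose proof PI_RGT_0 as HPI.
  assert (Hh : 0 < h).
  { unfold h. apply Rmin_pos. nra. apply Rdiv_lt_0_compat; lra. }
  assert (Hhk : 0 < kappa -> h * sqrt kappa < PI / 4).
  { intros _. assert (h <= PI / (8 * (sqrt kappa + 1))) by apply Rmin_r.
    assert (h * (8 * (sqrt kappa + 1)) <= PI).
    { apply Rmult_le_reg_r with (/ (8 * (sqrt kappa + 1))).
      apply Rinv_0_lt_compat; lra.
      rewrite Rmult_assoc, Rinv_r by lra. lra. }
    nra. }
  destruct (archimed_cor1 (h / L)) as (N & HN & HN0).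
  { apply Rdiv_lt_0_compat; lra. }
  assert (HNp : 0 < INR N) by (apply lt_0_INR; auto).
  assert (HLN : L <= INR N * h).
  { assert (/ INR N * L < h / L * L) by (apply Rmult_lt_compat_r; lra).
    unfold Rdiv in H. rewrite Rmult_assoc, Rinv_l, Rmult_1_r in H by lra.
    apply Rmult_lt_compat_l with (r := INR N) in H; auto.
    rewrite <- Rmult_assoc, Rinv_r, Rmult_1_l in H by lra. lra. }
  apply (iter X d kappa Hmet Hgeo Hc Hm x y y' L h eq_refl (eq_sym HL) Hh Hhk N z (t * L));
    try lra.
  - unfold h; apply Rmin_l.
  - nra.
  - nra.
Qed.

Lemma model_ok_all kappa : model_ok kappa.
Proof.
  intros s D Hs HD HD2 Hkc.
  destruct (Rtotal_order 0 kappa) as [Hp|[H0|Hn]].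
  - destruct (model_ok_pos kappa Hp s D Hs HD HD2 (Hkc Hp)) as (b1&b2&b3&E1&E2&E3&B&N).
    exists b1, b2, b3. repeat split; auto.
  - subst kappa. destruct (model_ok_0 s D Hs HD HD2) as (b1&b2&b3&E1&E2&E3&N).
    exists b1, b2, b3. repeat split; auto. intro; lra.
  - destruct (model_ok_neg kappa Hn s D Hs HD HD2) as (b1&b2&b3&E1&E2&E3&N).
    exists b1, b2, b3. repeat split; auto. intro; lra.
Qed.

Theorem mainTheorem9 (X : Type) (d : X -> X -> R) (kappa : R) :
  is_metric d -> is_geodesic_space d -> curv_ge d kappa -> non_branching d.
Proof.
  exact (main_from_model X d kappa (model_ok_all kappa)).
Qed.
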